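(* Let $\mathcal{P},\mathcal{S}$ be patterns, let $P\in\mathbb{R}^{n\times n}(\mathcal{P})$ be a reversible stochastic matrix with stationary distribution $\boldsymbol{\pi}$, $\hat{\boldsymbol{\pi}}=\boldsymbol{\pi}^{1/2}$ entrywise, and let \[ \mathcal{M}_{P,\boldsymbol{\pi}}=\Big\{X\in\mathbb{R}^{n\times n}_{\mathrm{exact}}(\mathcal{P}\cup\mathcal{S}) : X=X^\top,\ X\hat{\boldsymbol{\pi}}=\hat{\boldsymbol{\pi}},\ X_{ij}>0\text{ if }\{i,j\}\in\mathcal{S},\ X_{ij}=\tfrac{\hat\pi_i}{\hat\pi_j}P_{ij}\text{ if }\{i,j\}\notin\mathcal{S}\Big\}. \] Then for every $X\in\mathcal{M}_{P,\boldsymbol{\pi}}$, the tangent space of $\mathcal{M}_{P,\boldsymbol{\pi}}$ at $X$ (the set of velocities $\dot\gamma(0)$ of smooth curves $\gamma$ in $\mathcal{M}_{P,\boldsymbol{\pi}}$ with $\gamma(0)=X$) is \[ \mathcal{T}_X\mathcal{M}_{P,\boldsymbol{\pi}}=\{\xi\in\mathbb{R}^{n\times n}(\mathcal{S}) : \xi=\xi^\top,\ \xi\hat{\boldsymbol{\pi}}=0\}. \]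
   Context: A stochastic matrix is nonnegative with row sums $1$; it is reversible if irreducible and its (unique, positive) stationary distribution $\boldsymbol{\pi}$ (probability vector with $\boldsymbol{\pi}^\top P=\boldsymbol{\pi}^\top$) satisfies $\pi_iP_{ij}=\pi_jP_{ji}$ for all $i,j$. A pattern is a set of unordered pairs $\{i,j\}$, $1\le i,j\le n$, containing $\{i,i\}$ for all $i$. $\mathbb{R}^{n\times n}(\mathcal{S})$ is the set of real $n\times n$ matrices $\Delta$ with $\Delta_{ij}=\Delta_{ji}=0$ whenever $\{i,j\}\notin\mathcal{S}$; $\mathbb{R}^{n\times n}_{\mathrm{exact}}(\mathcal{S})$ is the set of real $n\times n$ matrices $\Delta$ with ($\Delta_{ij}\ne0$ and $\Delta_{ji}\ne0$) if and only if $\{i,j\}\in\mathcal{S}$. *)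

(* Defs.v *)
From HB Require Import structures.
From mathcomp Require Import all_boot all_order all_algebra.
From mathcomp Require Import all_classical all_reals all_analysis.
Set Implicit Arguments. Unset Strict Implicit. Unset Printing Implicit Defensive.
Import Order.TTheory GRing.Theory Num.Theory.
Local Open Scope ring_scope.

Section Defs.
Variables (R : realType) (n : nat).

(* A pattern: set of unordered pairs {i,j} containing all {i,i}; encoded as a
   symmetric reflexive relation, {i,j} \in S  <->  S i j. *)
Definition is_pattern (S : rel 'I_n) : Prop :=
  (forall i, S i i) /\ (forall i j, S i j = S j i).

Definition pattern_union (S1 S2 : rel 'I_n) : rel 'I_n :=
  fun i j => S1 i j || S2 i j.

Definition in_pattern (S : rel 'I_n) (D : 'M[R]_n) : Prop :=
  forall i j, ~~ S i j -> D i j = 0 /\ D j i = 0.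

Definition in_pattern_exact (S : rel 'I_n) (D : 'M[R]_n) : Prop :=
  forall i j, (D i j != 0 /\ D j i != 0) <-> S i j.

Definition stochastic (P : 'M[R]_n) : Prop :=
  (forall i j, 0 <= P i j) /\ (forall i, \sum_j P i j = 1).

Definition irreducible (P : 'M[R]_n) : Prop :=
  forall i j, exists k : nat, 0 < (P ^+ k) i j.

Definition stationary_distribution (P : 'M[R]_n) (pi : 'rV[R]_n) : Prop :=
  (forall i, 0 <= pi 0 i) /\ \sum_i pi 0 i = 1 /\ pi *m P = pi.

Definition reversible (P : 'M[R]_n) (pi : 'rV[R]_n) : Prop :=
  [/\ stochastic P, irreducible P, stationary_distribution P pi,
      (forall i, 0 < pi 0 i) &
      (forall i j, pi 0 i * P i j = pi 0 j * P j i)].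

Definition sqrt_vec (pi : 'rV[R]_n) : 'cV[R]_n := \col_i Num.sqrt (pi 0 i).

Definition Mset (Pp S : rel 'I_n) (P : 'M[R]_n) (pi : 'rV[R]_n) (X : 'M[R]_n)
  : Prop :=
  let ph := sqrt_vec pi in
  [/\ in_pattern_exact (pattern_union Pp S) X,
      X^T = X,
      X *m ph = ph,
      (forall i j, S i j -> 0 < X i j) &
      (forall i j, ~~ S i j -> X i j = ph i 0 / ph j 0 * P i j)].

Definition smooth_curve (gamma : R -> 'M[R]_n) (e : R) : Prop :=
  forall (i j : 'I_n) (k : nat) (t : R), `|t| < e ->
    derivable (derive1n k (fun s => gamma s i j)) t 1.

Definition velocity0 (gamma : R -> 'M[R]_n) : 'M[R]_n :=
  \matrix_(i, j) derive1 (fun s => gamma s i j) 0.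

Definition tangent_space (M : 'M[R]_n -> Prop) (X : 'M[R]_n) (xi : 'M[R]_n)
  : Prop :=
  exists (gamma : R -> 'M[R]_n) (e : R),
    [/\ 0 < e, smooth_curve gamma e,
        (forall t, `|t| < e -> M (gamma t)),
        gamma 0 = X & velocity0 gamma = xi].

End Defs.

(* Main.v *)
Require Import Defs.
From HB Require Import structures.
From mathcomp Require Import all_boot all_order all_algebra.
From mathcomp Require Import all_classical all_reals all_analysis.
Import Order.TTheory GRing.Theory Num.Theory.
Local Open Scope ring_scope.

Lemma aff_is_derive (R : realType) (a b t : R) :
  is_derive t 1 (fun s : R => a + s * b) b.
Proof.
have -> : (fun s : R => a + s * b) = cst a + b \o* id by apply/funext.
have d1 : derivable (b \o* id) t (1:R).
  by apply: derivableM; [exact: derivable_id| exact: derivable_cst].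
apply: DeriveDef.
  by apply: derivableD => //.
rewrite deriveD //.
by rewrite derive_cst deriveMr ?derive_id ?mulr1 ?add0r //; exact: derivable_id.
Qed.

Lemma aff_derive1n (R : realType) (k : nat) (a b : R) :
  exists a' b' : R, derive1n k (fun s : R => a + s * b) = (fun s => a' + s * b').
Proof.
elim: k a b => [|k IH] a b; first by exists a, b; rewrite derive1n0.
rewrite derive1Sn.
have -> : derive1 (fun s : R => a + s * b) = (fun s => b + s * 0).
  apply/funext => t; rewrite mulr0 addr0 derive1E.
  by have := @aff_is_derive _ a b t => -[].

exact: IH.
Qed.

Lemma aff_smooth (R : realType) (k : nat) (a b t : R) :
  derivable (derive1n k (fun s : R => a + s * b)) t 1.
Proof.
have [a' [b' ->]] := @aff_derive1n _ k a b.
by have := @aff_is_derive _ a' b' t => -[].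
Qed.

Lemma near_derive1 (R : realType) (f g : R -> R) (e : R) : 0 < e ->
  (forall t, `|t| < e -> f t = g t) -> derive1 f 0 = derive1 g 0.
Proof.
move=> e0 fg; rewrite !derive1E; apply: near_eq_derive.
near=> t; apply: fg; near: t; exists e => // z /=; by rewrite sub0r normrN.
Unshelve. all: by end_near.
Qed.

Lemma sum_derive1 (R : realType) (n : nat) (g : 'I_n -> R -> R) (c : 'I_n -> R) :
  (forall j, derivable (g j) 0 1) ->
  derive1 (fun s => \sum_j g j s * c j) 0 = \sum_j derive1 (g j) 0 * c j.
Proof.
move=> dg.
have h : forall j, is_derive (0:R) (1:R) (c j \o* g j) (derive1 (g j) 0 * c j).
  move=> j; apply: DeriveDef; first by apply: derivableM.
  by rewrite deriveMr // derive1E mulrC.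
have := is_derive_sum h.
rewrite fct_sumE => -[_ <-]; by rewrite derive1E.
Qed.

Theorem lemma4p5 (R : realType) (n : nat) (Pp S : rel 'I_n)
  (P : 'M[R]_n) (pi : 'rV[R]_n) :
  is_pattern Pp -> is_pattern S ->
  in_pattern Pp P -> reversible P pi ->
  forall X : 'M[R]_n, Mset Pp S P pi X ->
  forall xi : 'M[R]_n,
    tangent_space (Mset Pp S P pi) X xi <->
    [/\ in_pattern S xi, xi^T = xi & xi *m sqrt_vec pi = 0].
Proof.
move=> Ppat [Srefl Ssym] PinP rev X [Xex XT Xph XS Xnot] xi; split.
  case=> gamma [e [e0 sm inM g0 <-]].
  have der i j : derivable (fun s => gamma s i j) 0 1.
    by have := sm i j 0%N 0; rewrite derive1n0 normr0; apply.
  split.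
  - move=> i j nS; rewrite !mxE.
    have nS' : ~~ S j i by rewrite Ssym.
    split.
      rewrite (@near_derive1 _ _ (cst (X i j)) _ e0) ?derive1_cst // => t /inM [_ _ _ _ h].
      by rewrite /= h // Xnot.
    rewrite (@near_derive1 _ _ (cst (X j i)) _ e0) ?derive1_cst // => t /inM [_ _ _ _ h].
    by rewrite /= h // Xnot.
  - apply/matrixP => i j; rewrite !mxE.
    apply: (@near_derive1 _ _ _ _ e0) => t /inM [_ h _ _ _].
    by rewrite -{1}h mxE.
  - apply/matrixP => i k; rewrite !mxE.
    under eq_bigr do rewrite mxE.
    rewrite -sum_derive1 //.
    rewrite (@near_derive1 _ _ (cst (sqrt_vec pi i k)) _ e0) ?derive1_cst // => t /inM [_ _ h _ _].
    by rewrite -{2}h mxE.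
case=> xiS xiT xiph.
pose c i j := if S i j then (`|xi i j| + 1) / X i j else 0.
pose m := \sum_i \sum_j c i j.
have c0 i j : 0 <= c i j.
  rewrite /c; case: ifP => // Sij.
  by apply: divr_ge0; [apply: addr_ge0|apply: ltW; apply: XS].
have m0 : 0 <= m by apply: sumr_ge0 => i _; apply: sumr_ge0.
have cm i j : c i j <= m.
  rewrite /m (bigD1 i) //= (bigD1 j) //= -addrA lerDl.
  apply: addr_ge0; first by apply: sumr_ge0.
  by apply: sumr_ge0 => k _; apply: sumr_ge0.
pose e := (m + 1)^-1.
have e0 : 0 < e by rewrite invr_gt0 ltr_wpDl.
have key t i j : `|t| < e -> S i j -> 0 < X i j + t * xi i j.
  move=> te Sij.
  have X0 := XS i j Sij.
  have h1 : (`|xi i j| + 1) <= m * X i j.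
    by rewrite -ler_pdivrMr //; have := cm i j; rewrite /c Sij.
  have h2 : `|t * xi i j| <= e * (`|xi i j| + 1).
    rewrite normrM; apply: ler_pM => //; first exact: ltW.
    by rewrite lerDl.
  have h3 : e * (`|xi i j| + 1) <= e * (m * X i j) by rewrite ler_pM2l.
  have h4 : e * (m * X i j) < X i j.
    rewrite mulrA gtr_pMl // /e ltr_pdivrMl ?ltr_wpDl //.
    by rewrite mulr1 ltrDl.
  have h5 : - (t * xi i j) <= `|t * xi i j| by rewrite -normrN ler_norm.
  rewrite -(opprK (t * xi i j)) subr_gt0.
  apply: le_lt_trans h5 _; apply: le_lt_trans h2 _; exact: le_lt_trans h3 h4.
have xi0 i j : ~~ S i j -> xi i j = 0 by move/xiS => [].
have gE i j : (fun s : R => (X + s *: xi) i j) = (fun s => X i j + s * xi i j).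
  by apply/funext => s; rewrite !mxE.
exists (fun t => X + t *: xi), e; split => //.
- by move=> i j k t _; rewrite gE; apply: aff_smooth.
- move=> t te; split.
  + move=> i j; rewrite !mxE; case: (boolP (S i j)) => Sij.
      have Sji : S j i by rewrite Ssym.
      rewrite /pattern_union Sij orbT; split => // _.
      by split; rewrite gt_eqF //; apply: key.
    have Sji : ~~ S j i by rewrite Ssym.
    by rewrite !xi0 // !mulr0 !addr0; apply: Xex.
  + by rewrite raddfD /= linearZ /= XT xiT.
  + by rewrite mulmxDl -scalemxAl xiph scaler0 addr0.
  + by move=> i j Sij; rewrite !mxE; apply: key.
  + by move=> i j nS; rewrite -(Xnot i j nS) !mxE xi0 // mulr0 addr0.
- by rewrite scale0r addr0.
- apply/matrixP => i j; rewrite mxE gE derive1E.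
  by have := @aff_is_derive _ (X i j) (xi i j) 0 => -[].
Qed.
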